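(* Let $\mathbf A$ be a Mal'cev algebra, $n\ge1$, $\alpha_0,\dots,\alpha_{n-1}$ congruences of $\mathbf A$, and $a,b\in A$. The following are equivalent: (1) $(a,b)\in\psi_{2^n-1}(\Delta(\alpha_0,\dots,\alpha_{n-1}))$; (2) the $2^n$-tuple $(a,\dots,a,b)$ (all coordinates $a$ except the last, which is $b$) belongs to $\Delta(\alpha_0,\dots,\alpha_{n-1})$; (3) there exist $c_0,\dots,c_{2^{n-1}-2}\in A$ such that $(c_0,\dots,c_{2^{n-1}-2},a,c_0,\dots,c_{2^{n-1}-2},b)\in\Delta(\alpha_0,\dots,\alpha_{n-1})$; (4) $(a,b)\in[\alpha_0,\dots,\alpha_{n-1}]$.
   Context: A Mal'cev algebra is an algebra with a ternary term operation $q$ satisfying $q(x,x,y)=y=q(y,x,x)$. Higher commutator (Bulatov): for congruences $\alpha_0,\dots,\alpha_{n-1},\gamma$, say $\alpha_0,\dots,\alpha_{n-2}$ centralize $\alpha_{n-1}$ modulo $\gamma$ if for all tuples $\mathbf a_i,\mathbf b_i$ ($i<n$, with $\mathbf a_i\neq\mathbf b_i$ congruent modulo $\alpha_i$ coordinatewise) and every term operation $t$ such that $t(\mathbf x_0,\dots,\mathbf x_{n-2},\mathbf a_{n-1})\equiv_\gamma t(\mathbf x_0,\dots,\mathbf x_{n-2},\mathbf b_{n-1})$ for all $(\mathbf x_0,\dots,\mathbf x_{n-2})\in(\{\mathbf a_0,\mathbf b_0\}\times\dots\times\{\mathbf a_{n-2},\mathbf b_{n-2}\})\setminus\{(\mathbf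 b_0,\dots,\mathbf b_{n-2})\}$, we have $t(\mathbf b_0,\dots,\mathbf b_{n-2},\mathbf a_{n-1})\equiv_\gamma t(\mathbf b_0,\dots,\mathbf b_{n-2},\mathbf b_{n-1})$. $[\alpha_0,\dots,\alpha_{n-1}]$ is the smallest congruence $\gamma$ such that $\alpha_0,\dots,\alpha_{n-2}$ centralize $\alpha_{n-1}$ modulo $\gamma$. Tuples in $A^m$ are indexed by $0,\dots,m-1$; $k_{(i)}$ is the $i$-th binary digit of $k$ (least significant is $i=0$). For $a,b\in A$ and $i<n$, $\mathbf c_i^n(a,b)\in A^{2^n}$ has $k$-th coordinate $a$ if $k_{(i)}=0$ and $b$ if $k_{(i)}=1$. $\Delta(\alpha_0,\dots,\alpha_{n-1})$ is the subuniverse of $\mathbf A^{2^n}$ generated by $\{\mathbf c_i^n(a,b): i<n,\ (a,b)\in\alpha_i\}$. Forks: for $R\subseteq A^m$ and $i<m$, $\psi_i(R)$ is the set of pairs $(a,b)$ for which there exist $\mathbf c,\mathbf d\in R$ with $c_i=a$, $d_i=b$, and $c_k=d_k$ for all $k\neq i$. *)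

(* Defs.v *)
From mathcomp Require Import all_boot.
Set Implicit Arguments. Unset Strict Implicit. Unset Printing Implicit Defensive.

(* An algebra: carrier, operation symbols (arbitrary signature), arities,
   and basic operations (arguments given as finite functions, hence
   extensional). *)
Record algebra := Algebra {
  carrier :> Type;
  sym : Type;
  arity : sym -> nat;
  op : forall s : sym, {ffun 'I_(arity s) -> carrier} -> carrier
}.

Section UA.
Variable A : algebra.

Inductive term_op (V : Type) : ((V -> A) -> A) -> Prop :=
| term_proj (v : V) : term_op (fun e => e v)
| term_comp (s : sym A) (g : 'I_(arity s) -> (V -> A) -> A) :
    (forall j, term_op (g j)) ->
    term_op (fun e => op [ffun j => g j e]).

Definition trip (x y z : A) : 'I_3 -> A :=
  fun j => match val j with 0 => x | 1 => y | _ => z end.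

Definition malcev : Prop :=
  exists q : ('I_3 -> A) -> A, term_op q /\
    forall x y : A, q (trip x x y) = y /\ q (trip y x x) = y.

Definition congruence (R : A -> A -> Prop) : Prop :=
  [/\ (forall x, R x x), (forall x y, R x y -> R y x),
      (forall x y z, R x y -> R y z -> R x z) &
      (forall (s : sym A) (x y : {ffun 'I_(arity s) -> A}),
          (forall j, R (x j) (y j)) -> R (op x) (op y))].

(* Bulatov's centrality: alpha_0..alpha_{n-2} centralize alpha_{n-1} mod gamma.
   Tuples a_i, b_i have length m i; the term t has variables
   {i : 'I_n & 'I_(m i)} (the i-th block is filled with x_i).
   For a choice s of a/b on the first n-1 blocks and e on the last block,
   [choose s e i] is true iff block i receives b_i. *)
Definition choose (n : nat) (s : 'I_n -> bool) (e : bool) (i : 'I_n) : bool :=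
  if val i < n.-1 then s i else e.

Definition centralizes (n : nat) (alpha : 'I_n -> A -> A -> Prop)
  (gamma : A -> A -> Prop) : Prop :=
  forall (m : 'I_n -> nat) (a b : forall i : 'I_n, 'I_(m i) -> A)
         (t : ({i : 'I_n & 'I_(m i)} -> A) -> A),
    (forall i j, alpha i (a i j) (b i j)) ->
    (forall i, exists j, a i j <> b i j) ->
    term_op t ->
    let env (c : 'I_n -> bool) : {i : 'I_n & 'I_(m i)} -> A :=
      fun v => if c (tag v) then b (tag v) (tagged v) else a (tag v) (tagged v) in
    (forall s : 'I_n -> bool, (exists i : 'I_n, val i < n.-1 /\ s i = false) ->
       gamma (t (env (choose s false))) (t (env (choose s true)))) ->
    gamma (t (env (choose (fun _ => true) false)))
          (t (env (choose (fun _ => true) true))).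

Definition commutator (n : nat) (alpha : 'I_n -> A -> A -> Prop) (x y : A) : Prop :=
  forall gamma, congruence gamma -> centralizes alpha gamma -> gamma x y.

Inductive subalg_gen (m : nat) (X : ('I_m -> A) -> Prop) : ('I_m -> A) -> Prop :=
| sg_base (y : 'I_m -> A) : X y -> subalg_gen X y
| sg_op (s : sym A) (xs : 'I_(arity s) -> 'I_m -> A) (y : 'I_m -> A) :
    (forall j, subalg_gen X (xs j)) ->
    (forall k, y k = op [ffun j => xs j k]) -> subalg_gen X y.

Definition cvec (n i : nat) (x y : A) : 'I_(2 ^ n) -> A :=
  fun k => if odd (val k %/ 2 ^ i) then y else x.

Definition Delta (n : nat) (alpha : 'I_n -> A -> A -> Prop) : ('I_(2 ^ n) -> A) -> Prop :=
  subalg_gen (fun y => exists (i : 'I_n) (x z : A),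
                 alpha i x z /\ forall k, y k = @cvec n i x z k).

Definition fork (m : nat) (R : ('I_m -> A) -> Prop) (i : nat) (x y : A) : Prop :=
  exists c d : 'I_m -> A, R c /\ R d /\
    forall k : 'I_m, if val k == i then c k = x /\ d k = y else c k = d k.

End UA.

(* Main.v *)
Require Import Defs.
From mathcomp Require Import all_boot zify.
From Stdlib Require Import Classical ClassicalEpsilon FunctionalExtensionality.
Set Implicit Arguments. Unset Strict Implicit. Unset Printing Implicit Defensive.

Definition bitn (i k : nat) : bool := odd (k %/ 2 ^ i).

Fixpoint code (n : nat) (f : nat -> bool) : nat :=
  if n is n'.+1 then f 0 + 2 * code n' (fun i => f i.+1) else 0.

Lemma half_bx (b : bool) x : (b + 2 * x) %/ 2 = x.
Proof. by rewrite addnC mulnC divnMDl // divn_small ?addn0 //; case: b. Qed.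

Lemma odd_bx (b : bool) x : odd (b + 2 * x) = b.
Proof. by rewrite oddD oddM /= addbF oddb. Qed.

Lemma bitn0 k : bitn 0 k = odd k.
Proof. by rewrite /bitn expn0 divn1. Qed.

Lemma bitnS i k : bitn i.+1 k = bitn i (k %/ 2).
Proof. by rewrite /bitn expnS divnMA. Qed.

Lemma code_lt n f : code n f < 2 ^ n.
Proof.
elim: n f => [|n IH] f //=. rewrite expnS.
have := IH (fun i => f i.+1). set x := code _ _. set p := 2 ^ n.
case: (f 0) => /=; lia.
Qed.

Lemma bitn_code n f i : i < n -> bitn i (code n f) = f i.
Proof.
elim: n f i => [|n IH] f [|i] //= Hi.
  by rewrite bitn0 odd_bx.
by rewrite bitnS half_bx IH.
Qed.

Arguments code : simpl never.

Lemma bitn_uniq n k k' : k < 2 ^ n -> k' < 2 ^ n ->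
  (forall i, i < n -> bitn i k = bitn i k') -> k = k'.
Proof.
elim: n k k' => [|n IH] k k' /=.
  by rewrite expn0; case: k; case: k'.
move=> Hk Hk' H.
rewrite -(odd_double_half k) -(odd_double_half k').
have H0 := H 0 isT. rewrite !bitn0 in H0. rewrite H0.
congr (_ + _.*2).
apply: IH.
- rewrite -divn2 ltn_divLR // mulnC -expnS //.
- rewrite -divn2 ltn_divLR // mulnC -expnS //.
move=> i Hi. rewrite -!divn2 -!bitnS. exact: H.
Qed.

Lemma bitn_split i m q r : r < 2 ^ m ->
  bitn i (q * 2 ^ m + r) = if i < m then bitn i r else bitn (i - m) q.
Proof.
move=> Hr. rewrite /bitn. case: ltnP => Him.
  have -> : 2 ^ m = 2 ^ (m - i) * 2 ^ i by rewrite -expnD subnK // ltnW.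
  rewrite mulnA divnMDl ?expn_gt0 // oddD oddM oddX.
  have -> : (m - i == 0) = false by apply/negbTE; rewrite subn_eq0 -ltnNge.
  by rewrite andbF.
have -> : 2 ^ i = 2 ^ m * 2 ^ (i - m) by rewrite -expnD subnKC.
by rewrite divnMA divnMDl ?expn_gt0 // (divn_small Hr) addn0.
Qed.

Lemma bitn_small i k : k < 2 ^ i -> bitn i k = false.
Proof. by move=> H; rewrite /bitn divn_small. Qed.

Lemma bitn_pow_pred i m : bitn i (2 ^ m - 1) = (i < m).
Proof.
case: (ltnP i m) => Him.
  have -> : 2 ^ m - 1 = (2 ^ (m - i) - 1) * 2 ^ i + (2 ^ i - 1).
    have e : 2 ^ m = 2 ^ (m - i) * 2 ^ i by rewrite -expnD subnK // ltnW.
    rewrite e mulnBl mul1n.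
    have h1 : 0 < 2 ^ i by rewrite expn_gt0.
    have h2 : 2 ^ i <= 2 ^ (m - i) * 2 ^ i.
      by rewrite leq_pmull // expn_gt0.
    lia.
  rewrite bitn_split ?ltnn ?subnn.
    rewrite bitn0 oddB ?expn_gt0 // oddX.
    by have -> : (m - i == 0) = false by apply/negbTE; rewrite subn_eq0 -ltnNge.
  have h1 : 0 < 2 ^ i by rewrite expn_gt0. lia.
apply: bitn_small.
have : 2 ^ m <= 2 ^ i by rewrite leq_exp2l.
have h1 : 0 < 2 ^ m by rewrite expn_gt0. lia.
Qed.

Section Main.
Variables (A : algebra) (n : nat) (alpha : 'I_n.+1 -> A -> A -> Prop).
Hypothesis Hc : forall i, congruence (alpha i).

Local Notation D := (Delta alpha).
Local Notation L := (2 ^ n.+1 - 1).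

Lemma alpha_refl i x : alpha i x x.
Proof. by case: (Hc i). Qed.
Lemma alpha_sym i x y : alpha i x y -> alpha i y x.
Proof. by case: (Hc i) => _ H _ _; apply: H. Qed.

Lemma D_ext y y' : D y -> (forall k, y k = y' k) -> D y'.
Proof.
move=> H E; have -> : y' = y by apply: functional_extensionality => k; rewrite E.
exact: H.
Qed.

Lemma D_term (V : Type) (t : (V -> A) -> A) : term_op t ->
  forall ys : V -> 'I_(2 ^ n.+1) -> A, (forall v, D (ys v)) ->
  D (fun k => t (fun v => ys v k)).
Proof.
elim => [v|s g _ IH] ys Hys; first exact: Hys.
apply: (@sg_op _ _ _ s (fun j k => g j (fun v => ys v k))) => //.
by move=> j; apply: IH.
Qed.

Lemma term_pre (V W : Type) (f : W -> V) (t : (W -> A) -> A) :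
  term_op t -> term_op (fun e : V -> A => t (fun w => e (f w))).
Proof.
elim => [v|s g _ IH]; first exact: (term_proj _ (f v)).
exact: (@term_comp _ _ s (fun j e => g j (fun v => e (f v)))).
Qed.

Lemma D_const x : D (fun _ => x).
Proof.
apply: sg_base; exists ord0, x, x; split; first exact: alpha_refl.
by move=> k; rewrite /cvec; case: ifP.
Qed.

Definition codeI (f : nat -> bool) : 'I_(2 ^ n.+1) := Ordinal (code_lt n.+1 f).

Lemma D_reindex (g : nat -> bool -> bool) y : D y ->
  D (fun k => y (codeI (fun i => g i (bitn i k)))).
Proof.
elim => [y0 [i [x [z [Hxz Hy]]]] | s xs y0 _ IH Hy].
  apply: sg_base.
  exists i, (if g i false then z else x), (if g i true then z else x); split.
    by case: (g i false); case: (g i true); try exact: alpha_refl; try exact: alpha_sym.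
  move=> k; rewrite Hy /cvec /=.
  have -> : odd (code n.+1 (fun i0 => g i0 (bitn i0 k)) %/ 2 ^ i) = g i (bitn i k).
    by have := bitn_code (fun i0 => g i0 (bitn i0 k)) (ltn_ord i).
  rewrite /bitn; by case: (odd (k %/ 2 ^ i)); case: (g i _).
apply: (@sg_op _ _ _ s (fun j k => xs j (codeI (fun i => g i (bitn i k))))) => //.
Qed.

Definition RR x y := D (fun k : 'I_(2 ^ n.+1) => if val k == L then y else x).

Variable q : ('I_3 -> A) -> A.
Hypothesis Hq : term_op q.
Hypothesis Hq1 : forall x y, q (trip x x y) = y.
Hypothesis Hq2 : forall x y, q (trip y x x) = y.

Lemma D_q x y z : D x -> D y -> D z -> D (fun k => q (trip (x k) (y k) (z k))).
Proof.
move=> Dx Dy Dz.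
apply: (D_term Hq (ys := fun j k => trip (x k) (y k) (z k) j)).
by case=> [[|[|j]] Hj].
Qed.


Lemma codeI_last (f : nat -> bool) : (forall i, i < n.+1 -> f i) -> val (codeI f) = L.
Proof.
move=> Hf; apply: (bitn_uniq (n := n.+1)); first exact: code_lt.
  have h : 0 < 2 ^ n.+1 by rewrite expn_gt0. lia.
by move=> i Hi; rewrite bitn_code // bitn_pow_pred Hi Hf.
Qed.

Lemma bitn_codeI f (i : 'I_n.+1) : bitn i (val (codeI f)) = f i.
Proof. exact: bitn_code. Qed.

Lemma codeI_notlast (f : nat -> bool) i : i < n.+1 -> f i = false -> val (codeI f) != L.
Proof.
move=> Hi Hf; apply/eqP => E.
have := bitn_code f Hi. rewrite [code _ _]E bitn_pow_pred Hi Hf. by [].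
Qed.

Lemma Lmod : L %% 2 ^ n = 2 ^ n - 1.
Proof.
have h : 0 < 2 ^ n by rewrite expn_gt0.
have -> : L = 1 * 2 ^ n + (2 ^ n - 1) by rewrite expnS; lia.
by rewrite modnMDl modn_small //; lia.
Qed.

Lemma LP3 (f : nat -> A) : D (fun k : 'I_(2 ^ n.+1) => f k) ->
  (forall l, l < L -> f l = f (l %% 2 ^ n)) -> RR (f (2 ^ n - 1)) (f L).
Proof.
move=> Df Hf.
have De := D_reindex (fun i b => b && (i < n)) Df.
have h : 0 < 2 ^ n by rewrite expn_gt0.
have Hcol (k : 'I_(2 ^ n.+1)) :
    val (codeI (fun i => bitn i k && (i < n))) = k %% 2 ^ n.
  apply: (bitn_uniq (n := n.+1)); first exact: code_lt.
    have := ltn_pmod k h. have : 2 ^ n.+1 = 2 * 2 ^ n by rewrite expnS. lia.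
  move=> i Hi; rewrite bitn_code //.
  rewrite {1}(divn_eq k (2 ^ n)) bitn_split ?ltn_pmod //.
  case: (ltnP i n) => Hin; rewrite ?andbT ?andbF //.
  apply/esym/bitn_small.
  have := ltn_pmod k h. have : 2 ^ n <= 2 ^ i by rewrite leq_exp2l. lia.
apply: (D_ext (D_q (D_const (f (2 ^ n - 1))) De Df)) => k.
rewrite Hcol. case: eqP => Hk.
  by rewrite Hk Lmod Hq1.
have Hk' : val k < L.
 have : val k < 2 ^ n.+1 := ltn_ord k. move: Hk; set p := 2 ^ n.+1. lia.
by rewrite -(Hf _ Hk') Hq2.
Qed.

Lemma P3P2 (a b : A) (c : nat -> A) :
  D (fun k : 'I_(2 ^ n.+1) => if val k < 2 ^ n - 1 then c (val k)
      else if val k == 2 ^ n - 1 then a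
      else if val k < 2 * 2 ^ n - 1 then c (val k - 2 ^ n) else b) -> RR a b.
Proof.
move=> H.
set f := fun l => if l < 2 ^ n - 1 then c l
      else if l == 2 ^ n - 1 then a
      else if l < 2 * 2 ^ n - 1 then c (l - 2 ^ n) else b.
have h : 0 < 2 ^ n by rewrite expn_gt0.
have := @LP3 f H.
have -> : f (2 ^ n - 1) = a by rewrite /f ltnn eqxx.
have -> : f L = b.
  rewrite /f expnS.
  have -> : (2 * 2 ^ n - 1 < 2 ^ n - 1) = false by lia.
  have -> : (2 * 2 ^ n - 1 == 2 ^ n - 1) = false by lia.
  by rewrite ltnn.
apply=> l Hl.
case: (ltnP l (2 ^ n)) => Hl2; first by rewrite modn_small.
have -> : l %% 2 ^ n = l - 2 ^ n.
  rewrite {1}(_ : l = 1 * 2 ^ n + (l - 2 ^ n)); last by lia.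
  rewrite modnMDl modn_small //. move: Hl; rewrite expnS; lia.
rewrite /f.
have -> : (l < 2 ^ n - 1) = false by lia.
have -> : (l == 2 ^ n - 1) = false by lia.
have -> : (l < 2 * 2 ^ n - 1) = true by move: Hl; rewrite expnS; lia.
by have -> : (l - 2 ^ n < 2 ^ n - 1) = true by move: Hl; rewrite expnS; lia.
Qed.

Lemma RR_cong : congruence RR.
Proof.
split.
- move=> x; apply: (D_ext (D_const x)) => k; by case: ifP.
- move=> x y Hxy; apply: (D_ext (D_q (D_const y) Hxy (D_const x))) => k /=.
  by case: ifP => _; rewrite ?Hq1 ?Hq2.
- move=> x y z Hxy Hyz; apply: (D_ext (D_q Hxy (D_const y) Hyz)) => k /=.
  by case: ifP => _; rewrite ?Hq1 ?Hq2.
- move=> s xs ys H.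
  apply: (@sg_op _ _ _ s (fun j k => if val k == L then ys j else xs j)) => //.
  move=> k; case: ifP => _; congr op; apply/ffunP => j; by rewrite ffunE.
Qed.

Lemma P1P2 a b : fork D L a b -> RR a b.
Proof.
case=> c [d [Dc [Dd H]]].
apply: (D_ext (D_q (D_const a) Dc Dd)) => k /=.
have := H k; case: eqP => _ .
  by case=> -> ->; rewrite Hq1.
by move=> ->; rewrite Hq2.
Qed.

Lemma P2P1 a b : RR a b -> fork D L a b.
Proof.
move=> H; exists (fun _ => a), (fun k => if val k == L then b else a).
split; first exact: D_const. split => // k; by case: eqP.
Qed.

Record Rep := { RV : finType; Rlbl : RV -> 'I_n.+1; Rxa : RV -> A; Rxb : RV -> A;
  Rt : (RV -> A) -> A }.
Definition rep_ok (r : Rep) (y : 'I_(2 ^ n.+1) -> A) :=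
  [/\ term_op (@Rt r), forall v : RV r, alpha (Rlbl v) (Rxa v) (Rxb v) &
      forall k, y k = @Rt r (fun v => if bitn (Rlbl v) k then Rxb v else Rxa v)].

Lemma D_repr y : D y -> exists r, rep_ok r y.
Proof.
elim => [y0 [i [x [z [Hxz Hy]]]] | s xs y0 _ IH Hy].
  exists {| RV := unit; Rlbl := fun _ => i; Rxa := fun _ => x; Rxb := fun _ => z;
            Rt := fun e => e tt |}.
  split => //; first exact: term_proj.
set rj := fun j => proj1_sig (constructive_indefinite_description _ (IH j)).
have Hrj j : rep_ok (rj j) (xs j) := proj2_sig (constructive_indefinite_description _ (IH j)).
exists {| RV := {j : 'I_(arity s) & RV (rj j)};
          Rlbl := fun v => Rlbl (tagged v); Rxa := fun v => Rxa (tagged v);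
          Rxb := fun v => Rxb (tagged v);
          Rt := fun e => op [ffun j => @Rt (rj j) (fun v => e (Tagged (fun j => RV (rj j)) v))] |}.
split => /=.
- apply: (@term_comp _ _ s (fun j e => @Rt (rj j) (fun v => e (Tagged (fun j => RV (rj j)) v)))).
  move=> j; apply: term_pre; by case: (Hrj j).
- by case=> j v /=; case: (Hrj j).
- move=> k; rewrite Hy; congr op; apply/ffunP => j; rewrite !ffunE.
  by case: (Hrj j) => _ _ ->.
Qed.

Lemma P2_comm a b : RR a b -> commutator alpha a b.
Proof.
move=> H gamma Hg Hcen.
case: (D_repr H) => r [Ht Hal Hy].
case: Hg => grefl _ _ _.
pose m := fun _ : 'I_n.+1 => #|RV r|.
pose aa := fun (i : 'I_n.+1) (j : 'I_(m i)) =>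
  if Rlbl (enum_val j) == i then Rxa (enum_val j) else a.
pose bb := fun (i : 'I_n.+1) (j : 'I_(m i)) =>
  if Rlbl (enum_val j) == i then Rxb (enum_val j) else a.
pose t' := fun e : {i : 'I_n.+1 & 'I_(m i)} -> A =>
  @Rt r (fun v => e (existT (fun i => 'I_(m i)) (Rlbl v) (enum_rank v))).
have eval (c : 'I_n.+1 -> bool) :
  t' (fun v => if c (tag v) then bb (tag v) (tagged v) else aa (tag v) (tagged v))
  = (if val (codeI (fun l => c (inord l))) == L then b else a).
  rewrite Hy /t'; congr (Rt _); apply: functional_extensionality => v /=.
  rewrite /aa /bb enum_rankK eqxx bitn_code // inord_val //.
have Hal' : forall i j, alpha i (aa i j) (bb i j).
  move=> i j; rewrite /aa /bb; case: eqP => [<-|_]; first exact: Hal.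
  exact: alpha_refl.
have Ht' : term_op t' by apply: term_pre.
case: (classic (forall i, exists j, aa i j <> bb i j)) => Hd.
  have C := Hcen m aa bb t' Hal' Hd Ht'. cbv zeta in C.
  move: C; rewrite !eval.
  have E1 : val (codeI (fun l => @Defs.choose n.+1 xpredT false (inord l))) != L.
    apply: (codeI_notlast (i:=n)) => //. by rewrite /Defs.choose /= (@inordK n) // ltnn.
  have E2 : val (codeI (fun l => @Defs.choose n.+1 xpredT true (inord l))) = L.
    by apply: codeI_last => i _; rewrite /Defs.choose; case: ifP.
  rewrite (negbTE E1) E2 eqxx; apply.
  move=> s [i [Hi Hsi]]; rewrite !eval.
  have Ne e : val (codeI (fun l => @Defs.choose n.+1 s e (inord l))) != L.
    apply: (codeI_notlast (i:=i)) => //. by rewrite inord_val /Defs.choose Hi.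
  rewrite !(negbTE (Ne _)). exact: grefl.
have [i0 Hi0] : exists i0, forall j, aa i0 j = bb i0 j.
  apply: NNPP => H1; apply: Hd => i; apply: NNPP => H2; apply: H1; exists i.
  move=> j; apply: NNPP => H3; apply: H2; by exists j.
have Ea := Hy (codeI (fun l => l != i0)).
have Eb := Hy (codeI (fun _ => true)).
cbv beta in Ea. cbv beta in Eb.
rewrite (negbTE (codeI_notlast (i:=i0) (ltn_ord i0) _)) ?eqxx // in Ea.
rewrite codeI_last ?eqxx // in Eb.
have -> : a = b.
  rewrite Ea Eb; congr (Rt _); apply: functional_extensionality => v.
  rewrite !bitn_codeI; case: eqP => [E|] //=.
  by have := Hi0 (enum_rank v); rewrite /aa /bb enum_rankK (ord_inj E) eqxx.
exact: grefl.
Qed.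

Local Notation N := (2 ^ n).

Lemma ord_last (i : 'I_n.+1) : ~~ (val i < n) -> val i = n.
Proof. move=> H; have := ltn_ord i; rewrite /= in H *; lia. Qed.

Lemma RR_central : centralizes alpha RR.
Proof.
move=> m aa bb t Hal _ Ht; cbv zeta beta => Hs.
have hL : 2 ^ n.+1 = 2 * N by rewrite expnS.
have hN : 0 < N by rewrite expn_gt0.
pose Y l := t (fun v => if bitn (tag v) l then bb (tag v) (tagged v) else aa (tag v) (tagged v)).
have Ych (c : 'I_n.+1 -> bool) l : (forall i : 'I_n.+1, c i = bitn i l) ->
    t (fun v => if c (tag v) then bb (tag v) (tagged v) else aa (tag v) (tagged v)) = Y l.
  move=> Hcl; rewrite /Y; congr t; apply: functional_extensionality => v.
  by rewrite Hcl.
have DY : D (fun k : 'I_(2 ^ n.+1) => Y k).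
  have := D_term Ht (ys := fun v k => cvec (tag v) (aa (tag v) (tagged v)) (bb (tag v) (tagged v)) k).
  apply=> v; apply: sg_base.
  by exists (tag v), (aa (tag v) (tagged v)), (bb (tag v) (tagged v)); split.
pose Z j l := if (N <= l) && (l < N + j) then Y (l - N) else Y l.
have HR j : j < N - 1 -> RR (Y j) (Y (N + j)).
  move=> Hj.
  have Hex : exists i : 'I_n.+1, val i < n.+1.-1 /\ bitn i j = false.
    apply: NNPP => Hne.
    have Hall : forall i, i < n -> bitn i j = bitn i (2 ^ n - 1).
      move=> i Hi; rewrite bitn_pow_pred Hi.
      case E: (bitn i j) => //; exfalso; apply: Hne; exists (inord i).
      have e : val (inord i : 'I_n.+1) = i by apply: inordK; lia.
      by rewrite /= e.
    have h1 : j < 2 ^ n by lia.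
    have h2 : N - 1 < 2 ^ n by lia.
    have := @bitn_uniq n j (N - 1) h1 h2 Hall. lia.
  have E2 : forall i : 'I_n.+1, @Defs.choose n.+1 (fun i => bitn i j) true i = bitn i (N + j).
    move=> i; rewrite /Defs.choose /=.
    rewrite (_ : N + j = 1 * 2 ^ n + j) ?bitn_split; last by lia.
    case: ifP => //= Hin. rewrite (ord_last (negbT Hin)).
    by rewrite subnn.
    lia.
  have E1 : forall i : 'I_n.+1, @Defs.choose n.+1 (fun i => bitn i j) false i = bitn i j.
    move=> i; rewrite /Defs.choose /=; case: ifP => // Hin.
    rewrite (ord_last (negbT Hin)).
    by rewrite bitn_small //; lia.
  have := Hs (fun i => bitn i j) Hex. cbv beta.
  by rewrite (Ych _ _ E1) (Ych _ _ E2).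
have DZ j : j <= N - 1 -> D (fun k : 'I_(2 ^ n.+1) => Z j k).
  elim: j => [_|j IH Hj].
    apply: (D_ext DY) => k; rewrite /Z addn0.
    by case: (leqP N k) => //= h; rewrite ltnNge h.
  have Hr := HR j Hj.
  have DE := D_reindex (fun i b => b == bitn i (N + j)) Hr.
  have Hidx (k : 'I_(2 ^ n.+1)) :
      (val (codeI (fun i => bitn i k == bitn i (N + j))) == L) = (nat_of_ord k == N + j).
    case: (eqVneq (nat_of_ord k) (N + j)) => Hk.
      by apply/eqP; apply: codeI_last => i Hi; rewrite Hk eqxx.
    apply/negbTE/eqP => E; move/eqP: Hk; apply.
    apply: (bitn_uniq (n := n.+1)) => //; first by lia.
    move=> i Hi; have := bitn_code (fun i => bitn i k == bitn i (N + j)) Hi.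
    by rewrite [code _ _]E bitn_pow_pred Hi => /esym/eqP.
  apply: (D_ext (D_q (IH (ltnW Hj)) DE (D_const (Y j)))) => k.
  cbv beta. rewrite Hidx.
  case: (eqVneq (nat_of_ord k) (N + j)) => Hk.
    rewrite Hk /Z leq_addr ltnn /= Hq1 addnS ltnS leqnn /=.
    by rewrite addKn.
  rewrite Hq2 /Z. have -> : ((N <= k) && (k < N + j.+1)) = ((N <= k) && (k < N + j)) by move/eqP: Hk; lia.
  by [].
have DZ' := DZ (N - 1) (leqnn _).
have := LP3 DZ'.
have -> : Z (N - 1) (N - 1) = Y (N - 1).
  by rewrite /Z (_ : (N <= N - 1) = false) //; lia.
have -> : Z (N - 1) L = Y L.
  by rewrite /Z (_ : (L < N + (N - 1)) = false) ?andbF //; lia.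
rewrite (Ych _ (N - 1)) ?(Ych _ L); first apply.
- move=> l Hl; rewrite /Z.
  case: (ltnP l N) => Hl2.
    by rewrite modn_small // (_ : (N <= l) = false) //; lia.
  have -> : l %% N = l - N.
    rewrite {1}(_ : l = 1 * N + (l - N)); last by lia.
    rewrite modnMDl modn_small //. lia.
  have -> : (l < N + (N - 1)) = true by lia.
  have -> : (N <= l - N) = false by lia.
  by [].
- by move=> i; rewrite /Defs.choose bitn_pow_pred ltn_ord; case: ifP.
- move=> i; rewrite /Defs.choose bitn_pow_pred /=; case: ifP => // H; apply/esym/negbTE; exact: H.
Qed.

End Main.

Theorem mainTheorem7 (A : algebra) (n : nat) (alpha : 'I_n -> A -> A -> Prop)
  (a b : A) :
  malcev A -> 0 < n -> (forall i, congruence (alpha i)) ->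
  let P1 := fork (Delta alpha) (2 ^ n - 1) a b in
  let P2 := Delta alpha (fun k => if val k == 2 ^ n - 1 then b else a) in
  let N := 2 ^ n.-1 in
  let P3 := exists c : nat -> A,
      Delta alpha (fun k => if val k < N - 1 then c (val k)
                            else if val k == N - 1 then a
                            else if val k < 2 * N - 1 then c (val k - N)
                            else b) in
  let P4 := commutator alpha a b in
  (P1 <-> P2) /\ (P2 <-> P3) /\ (P3 <-> P4).
Proof.
move=> [q [Hq Hq12]] Hn.
case: n alpha Hn => [//|n] alpha _ Hc.
cbv zeta.
have Hq1 x y : q (trip x x y) = y by case: (Hq12 x y).
have Hq2 x y : q (trip y x x) = y by case: (Hq12 x y).
change (n.+1.-1) with n.
have hL : 2 ^ n.+1 = 2 * 2 ^ n by rewrite expnS.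
have hN : 0 < 2 ^ n by rewrite expn_gt0.
have P2P3 : RR alpha a b -> exists c : nat -> A,
      Delta alpha (fun k => if val k < 2 ^ n - 1 then c (val k)
                            else if val k == 2 ^ n - 1 then a
                            else if val k < 2 * 2 ^ n - 1 then c (val k - 2 ^ n)
                            else b).
  move=> H; exists (fun _ => a); apply: (D_ext H) => k.
  rewrite -hL.
  case: eqP => E.
    rewrite E.
    have -> : (2 ^ n.+1 - 1 < 2 ^ n - 1) = false by lia.
    have -> : (2 ^ n.+1 - 1 == 2 ^ n - 1) = false by lia.
    by rewrite ltnn.
  have hk : val k < 2 ^ n.+1 := ltn_ord k.
  have -> : (val k < 2 ^ n.+1 - 1) = true by lia.
  by case: ifP => //; case: ifP.
split; [|split].
- split; [exact: (P1P2 Hc Hq Hq1 Hq2) | exact: (P2P1 Hc)].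
- split; first exact: P2P3.
  by case=> c; apply: (P3P2 Hc Hq Hq1 Hq2).
- split.
    case=> c Hc3; apply: P2_comm; first exact: Hc.
    exact: (P3P2 Hc Hq Hq1 Hq2 Hc3).
  move=> H; apply: P2P3; apply: H.
    exact: (RR_cong Hc Hq Hq1 Hq2).
  exact: (RR_central Hc Hq Hq1 Hq2).
Qed.
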